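(* For positive integers $r,m$ let \[J_{r,m}=\{(j_1,\dots,j_r)\in\mathbb{Z}^r:\ 1\le j_1<\dots<j_r\le m,\ j_k\le j_{k+1}-2\ \text{for all } k=1,\dots,r-1\}.\] Then \[\sum_{(j_1,\dots,j_r)\in J_{r,m}}\ \prod_{k=1}^{r}j_{r-k+1}=\frac{(m+1)_{2r}}{2^r\,r!},\] where $(x)_t=x(x-1)\cdots(x-t+1)$ is the falling factorial. *)

(* Defs.v *)
From mathcomp Require Import all_boot all_order all_algebra.
Set Implicit Arguments. Unset Strict Implicit. Unset Printing Implicit Defensive.

(* J_{r,m}: tuples (j_1,...,j_r) (0-indexed as j : 'I_r -> 'I_m.+1, with
   value j k standing for j_{k+1}) with 1 <= j_1, j_r <= m, and
   j_k <= j_{k+1} - 2 (i.e. j_k + 2 <= j_{k+1}); strict increase follows. *)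
Definition inJ (r m : nat) (j : {ffun 'I_r -> 'I_m.+1}) : bool :=
  [forall k : 'I_r, 1 <= j k] &&
  [forall k : 'I_r, forall l : 'I_r,
     (val l == (val k).+1) ==> (j k + 2 <= j l)].

(* Main.v *)
Require Import Defs.
From mathcomp Require Import all_boot all_order all_algebra.
From mathcomp Require Import zify ring.
Import GRing.Theory Num.Theory.
Local Open Scope ring_scope.

Definition Q (m r b : nat) (j : {ffun 'I_r -> 'I_m.+1}) : bool :=
  inJ j && [forall k : 'I_r, (val k == r.-1) ==> (j k <= b)%N].

Arguments Q {m r} b j.

Definition H (m r b : nat) : rat :=
  \sum_(j : {ffun 'I_r -> 'I_m.+1} | Q b j) \prod_(k < r) ((j k : nat)%:R : rat).

Definition hh (m r : nat) (p : 'I_m.+1 * {ffun 'I_r -> 'I_m.+1}) : {ffun 'I_r.+1 -> 'I_m.+1} :=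
  [ffun i : 'I_r.+1 => if unlift ord_max i is Some i' then p.2 i' else p.1].

Arguments hh {m r} p.

Definition hinv (m r : nat) (j : {ffun 'I_r.+1 -> 'I_m.+1}) : 'I_m.+1 * {ffun 'I_r -> 'I_m.+1} :=
  (j ord_max, [ffun i : 'I_r => j (lift ord_max i)]).

Arguments hinv {m r} j.

Lemma vlm n (i : 'I_n) : \val (lift ord_max i) = \val i.
Proof. exact: lift_max. Qed.

Lemma hh_max m r p : @hh m r p ord_max = p.1.
Proof. by rewrite ffunE unlift_none. Qed.

Lemma hh_lift m r p i : @hh m r p (lift ord_max i) = p.2 i.
Proof. by rewrite ffunE liftK. Qed.

Lemma hhK m r : cancel (@hh m r) (@hinv m r).
Proof.
move=> [v g]; rewrite /hinv hh_max; congr (_, _).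
by apply/ffunP => i; rewrite ffunE hh_lift.
Qed.

Lemma hinvK m r : cancel (@hinv m r) (@hh m r).
Proof.
move=> j; apply/ffunP => i; rewrite ffunE.
by case: unliftP => [i' ->|->] /=; rewrite ?ffunE.
Qed.

Lemma Qh m r b v g :
  Q b (@hh m r (v, g)) = [&& (1 <= v)%N, (v <= b)%N & Q (v - 2) g].
Proof.
apply/idP/idP.
- case/andP=> /andP [/forallP A /forallP B] /forallP C.
  have A' k : (1 <= g k)%N by have := A (lift ord_max k); rewrite hh_lift.
  apply/and3P; split.
  + by have := A ord_max; rewrite hh_max.
  + by have := C ord_max; rewrite hh_max /= eqxx.
  apply/andP; split; first (apply/andP; split).
  + by apply/forallP.
  + apply/forallP => k; apply/forallP => l; apply/implyP => e.
    have := B (lift ord_max k) => /forallP /(_ (lift ord_max l)).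
    rewrite !hh_lift => /implyP; apply. by rewrite !vlm.
  apply/forallP => k; apply/implyP => /eqP e.
  have := B (lift ord_max k) => /forallP /(_ ord_max).
  rewrite vlm hh_lift hh_max /=.
  change (nat_of_ord k = r.-1) in e.
  have -> : (r == k.+1) by apply/eqP; have := ltn_ord k; lia.
  move=> /= h; lia.
- case/and3P => v1 vb /andP [/andP [/forallP A /forallP B] /forallP C].
  apply/andP; split; first (apply/andP; split).
  + apply/forallP => i; case: (unliftP ord_max i) => [i' ->|->].
    * by rewrite hh_lift.
    * by rewrite hh_max.
  + apply/forallP => k; apply/forallP => l; apply/implyP => /eqP e.
    case: (unliftP ord_max k) e => [k' ->|->]; case: (unliftP ord_max l) => [l' ->|->];
      rewrite ?vlm /= => e.
    * rewrite !hh_lift; have := B k' => /forallP /(_ l') /implyP; apply; apply/eqP; exact e.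
    * rewrite hh_lift hh_max /=.
      have := C k' => /implyP. 
      have -> : (\val k' == r.-1) by apply/eqP; apply/esym; exact: (congr1 predn e).
      move=> /(_ isT).
      have := A k'; lia.
    * by have := ltn_ord l'; rewrite e /= ltnNge leqnSn.
    * lia.
  + apply/forallP => i; apply/implyP => /eqP e.
    case: (unliftP ord_max i) e => [i' ->|->]; rewrite ?vlm /= => e.
    * by have := ltn_ord i'; rewrite e ltnn.
    * by rewrite hh_max.
Qed.
Lemma hockey (k n : nat) : (k.+1 * \sum_(v < n) v ^_ k = n ^_ k.+1)%N.
Proof.
elim: n => [|n IH]; first by rewrite big_ord0 muln0 ffact0n.
rewrite big_ord_recr /= mulnDr IH ffactSS ffactnSr.
case: (leqP k n) => hk.
  rewrite mulnC -mulnDl; congr (_ * _)%N; lia.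
rewrite ffact_small //; lia.
Qed.

Lemma ffact_shift (v k : nat) : (v * (v - 2).+1 ^_ (2 * k) = v ^_ (2 * k).+1)%N.
Proof.
case: v => [|[|v]].
- by rewrite mul0n ffact0n.
- rewrite mul1n ffactSS mul1n; case: k => [|k] //.
  by rewrite mulnS !ffactSS ffact0n.
- by rewrite ffactSS; have -> : (v.+2 - 2 = v)%N by lia.
Qed.

Lemma H0 m b : H m 0 b = 1.
Proof.
rewrite /H (eq_bigl predT); last first.
  move=> j; apply/andP; split; first (apply/andP; split).
  - by apply/forallP => -[].
  - by apply/forallP => -[].
  - by apply/forallP => -[].
rewrite (eq_bigr (fun _ => 1)); last by move=> j _; rewrite big_ord0.
by rewrite sumr_const cardT -cardE card_ffun !card_ord expn0.
Qed.

Lemma HS m r b :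
  H m r.+1 b = \sum_(v < m.+1 | (1 <= v)%N && (v <= b)%N) (v : nat)%:R * H m r (v - 2).
Proof.
rewrite /H (reindex (@hh m r)); last first.
  by apply: onW_bij; exists (@hinv m r); [exact: hhK | exact: hinvK].
under eq_bigl do rewrite Qh.
rewrite (eq_bigr (fun p : 'I_m.+1 * {ffun 'I_r -> 'I_m.+1} => (p.1 : nat)%:R * \prod_(k < r) ((p.2 k : nat)%:R : rat))); last first.
  move=> [v g] _ /=; rewrite big_ord_recr /= mulrC.
  rewrite hh_max /=; congr (_ * _).
  apply: eq_bigr => i _; rewrite -(hh_lift _ _ (v, g) i); congr ((hh _ _ : nat)%:R).
  by apply: val_inj; rewrite vlm.
under [RHS]eq_bigr do rewrite mulr_sumr.
rewrite [RHS]pair_big_dep; apply: eq_bigl => -[v g] /=; by rewrite andbA.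
Qed.

Lemma Hval m r : forall b, (b <= m)%N ->
  H m r b = ((b.+1 ^_ (2 * r))%N)%:R / ((2 ^ r * r`!)%N)%:R.
Proof.
elim: r => [|r IH] b hb.
  by rewrite H0 muln0 ffactn0 expn0 fact0 divr1.
rewrite HS.
set c : rat := ((2 ^ r * r`!)%N)%:R.
have cne : c != 0 by rewrite pnatr_eq0 muln_eq0 negb_or expn_eq0 /= -lt0n fact_gt0.
rewrite (eq_bigr (fun v : 'I_m.+1 => ((v : nat) ^_ (2 * r).+1)%:R / c)); last first.
  move=> v /andP [_ vb]; rewrite IH; last by have := ltn_ord v; lia.
  by rewrite mulrA -natrM ffact_shift.
rewrite big_mkcond /=.
rewrite (eq_bigr (fun v : 'I_m.+1 => if (v < b.+1)%N then ((v : nat) ^_ (2 * r).+1)%:R / c else 0)); last first.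
  move=> v _; case: (nat_of_ord v) => [|v'] /=.
    by rewrite ffact0n mul0r.
  by rewrite ltnS.
rewrite -big_mkcond /= -(@big_ord_widen _ 0 +%R b.+1 m.+1 (fun v => ((v ^_ (2 * r).+1)%N)%:R / c) hb).
rewrite -mulr_suml -natr_sum.
have hk := hockey (2 * r).+1 b.+1.
have -> : (\sum_(i < b.+1) i ^_ (2 * r).+1)%N%:R = ((b.+1 ^_ (2 * r).+2)%N)%:R / ((2 * r).+2)%:R :> rat.
  by rewrite -hk natrM mulrAC divff ?mul1r // pnatr_eq0.
have -> : (2 * r.+1 = (2 * r).+2)%N by lia.
rewrite expnS factS.
rewrite /c !natrM.
have h1 : ((2 * r).+2)%:R = 2%:R * (r.+1)%:R :> rat by rewrite -natrM; congr (_%:R); lia.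
rewrite h1 -mulrA mulrC.
rewrite /c !natrM in cne.
field.
by rewrite addrC natr1 !pnatr_eq0 -lt0n fact_gt0 expn_eq0.
Qed.

Theorem lemma3p4 (r m : nat) (hr : (0 < r)%N) (hm : (0 < m)%N) :
  (\sum_(j : {ffun 'I_r -> 'I_m.+1} | inJ j)
      \prod_(k < r) ((j (rev_ord k) : nat)%:R : rat))
  = (((m.+1) ^_ (2 * r))%N)%:R / ((2 ^ r * r`!)%N)%:R.
Proof.
rewrite -(@Hval m r m) // /H.
apply: eq_big.
  move=> j; rewrite /Q; case: (inJ j) => //=; symmetry.
  by apply/forallP => k; apply/implyP => _; exact: leq_ord.
move=> j _; by rewrite [RHS](reindex_inj rev_ord_inj).
Qed.
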